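(* Let $\omega\ge 3$ be an integer, let $\varepsilon>0$ and $c>0$ be real constants, and let $k\ge 1$. Let $G$ be a graph with $m$ edges, clique number $\omega(G)=\omega$, and $t(G)\le c\,m^{1.5-\varepsilon}$. If $m\ge \big(2.2\,c\,\omega^{2k}\big)^{1/\varepsilon}$, then \[\Lambda_\ell(G) < 2\left(\frac{\sqrt[3]{\omega}}{1+\sqrt[3]{\omega}}+\frac{1}{\omega^{k}}\right),\] where $\ell=\min\{n^+,\omega\}$.
   Context: For a simple graph $G$ on $n$ vertices and $m$ edges, let $\lambda_1\ge\lambda_2\ge\cdots\ge\lambda_n$ be the eigenvalues of its adjacency matrix $A(G)$. The inertia $(n^+,n^0,n^-)$ means $G$ has $n^+$ positive eigenvalues, eigenvalue $0$ with multiplicity $n^0$, and $n^-$ negative eigenvalues. $\omega(G)$ is the clique number and $t(G)$ the number of triangles of $G$. Define $s_k(G)=\sum_{i=1}^k\lambda_i^2$ and $\Lambda_k(G)=s_k(G)/m$. *)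

(* Defs.v *)
From HB Require Import structures.
From mathcomp Require Import all_boot all_order all_algebra.
From mathcomp Require Import all_classical all_reals exp.
Set Implicit Arguments. Unset Strict Implicit. Unset Printing Implicit Defensive.
Import Order.TTheory GRing.Theory Num.Theory.
Local Open Scope ring_scope.

Definition simple_graph (n : nat) (adj : rel 'I_n) : Prop :=
  symmetric adj /\ irreflexive adj.

Definition adj_mx (R : nzRingType) (n : nat) (adj : rel 'I_n) : 'M[R]_n :=
  \matrix_(i, j) (adj i j)%:R.

Definition edges (n : nat) (adj : rel 'I_n) : {set {set 'I_n}} :=
  [set e : {set 'I_n} | [exists x, exists y, adj x y && (e == [set x; y])]].

Definition num_edges (n : nat) (adj : rel 'I_n) : nat := #|edges adj|.

Definition is_clique (n : nat) (adj : rel 'I_n) (S : {set 'I_n}) : bool :=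
  [forall x in S, forall y in S, (x != y) ==> adj x y].

Definition clique_number (n : nat) (adj : rel 'I_n) : nat :=
  \max_(S : {set 'I_n} | is_clique adj S) #|S|.

Definition num_triangles (n : nat) (adj : rel 'I_n) : nat :=
  #|[set S : {set 'I_n} | is_clique adj S && (#|S| == 3%N)]|.

Definition sorted_eigenvalues (R : realType) (n : nat) (A : 'M[R]_n)
  (lam : seq R) : Prop :=
  char_poly A = \prod_(x <- lam) ('X - x%:P) /\ sorted (>=%R) lam.

Definition n_pos (R : realType) (lam : seq R) : nat := count (fun x => 0 < x) lam.

Definition s_k (R : realType) (lam : seq R) (k : nat) : R :=
  \sum_(x <- take k lam) x ^+ 2.

Definition Lambda_k (R : realType) (lam : seq R) (m k : nat) : R :=
  s_k lam k / m%:R.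

(* Main.v *)
Require Import Defs.
From HB Require Import structures.
From mathcomp Require Import all_boot all_order all_algebra.
From mathcomp Require Import all_classical all_reals exp.
From mathcomp Require Import complex spectral.
From mathcomp Require Import ring lra zify.
Import Order.TTheory GRing.Theory Num.Theory.
Local Open Scope ring_scope.
Set Implicit Arguments. Unset Strict Implicit. Unset Printing Implicit Defensive.
Lemma char_poly_conj (F : fieldType) n (P D : 'M[F]_n) : P \in unitmx ->
  char_poly (invmx P *m D *m P) = char_poly D.
Proof.
move=> Pu; rewrite /char_poly.
have ->: char_poly_mx (invmx P *m D *m P) =
   map_mx polyC (invmx P) *m char_poly_mx D *m map_mx polyC P.
  rewrite /char_poly_mx mulmxBr mulmxBl !map_mxM.
  congr (_ - _).
  by rewrite mul_mx_scalar -scalemxAl -map_mxM mulVmx // map_mx1 scalemx1.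
rewrite !det_mulmx mulrC mulrA -det_mulmx -map_mxM mulmxV //.
by rewrite map_mx1 det1 mul1r.
Qed.

Lemma trace_pow (R : realType) n (A : 'M[R]_n) (lam : seq R) :
  A^T = A -> char_poly A = \prod_(x <- lam) ('X - x%:P) ->
  \tr (A *m A) = \sum_(x <- lam) x ^+ 2 /\
  \tr (A *m A *m A) = \sum_(x <- lam) x ^+ 3.
Proof.
move=> tA cA.
pose f := real_complex R.
pose Ac := map_mx f A.
have Asym : Ac \is symmetricmx.
  apply/is_hermitianmxP; rewrite expr0 scale1r map_mx_id // /Ac.
  by rewrite map_trmx tA.
have Areal : Ac \is a realmx.
  by apply/mxOverP => i j; rewrite mxE; apply/complex_realP; eexists.
have /orthomx_spectralP Ae := symmetric_normalmx Asym Areal.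
set P := spectralmx Ac in Ae; set d := spectral_diag Ac in Ae.
have Pu : P \in unitmx by apply: spectral_unit.
have cAc : char_poly Ac = \prod_(x <- map f lam) ('X - x%:P).
  rewrite -map_char_poly cA rmorph_prod big_map.
  by apply: eq_bigr => x _; rewrite rmorphB /= map_polyX map_polyC.
have cD : char_poly Ac = \prod_(j < n) ('X - (d 0 j)%:P).
  rewrite Ae char_poly_conj // char_poly_trig ?diag_mx_is_trig //.
  by apply: eq_bigr => j _; rewrite mxE eqxx mulr1n.
have pe : perm_eq (map f lam) [seq d 0 j | j <- enum 'I_n].
  apply: prod_XsubC_eq; rewrite -cAc cD big_map big_enum.
  by [].
have cj M N : (invmx P *m M *m P) *m (invmx P *m N *m P) = invmx P *m (M *m N) *m P.
  by rewrite !mulmxA mulmxK // -!mulmxA.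
have trc M : \tr (invmx P *m M *m P) = \tr M.
  by rewrite mxtrace_mulC mulmxA mulmxV // mul1mx.
have sd k : \sum_(j < n) d 0 j ^+ k = f (\sum_(x <- lam) x ^+ k).
  rewrite /f rmorph_sum.
  under [RHS]eq_bigr => x _ do rewrite rmorphXn.
  rewrite -[RHS](big_map _ predT (fun y => y ^+ k)) /= -/f (perm_big _ pe) /=.
  by rewrite big_map big_enum.
have e2 : f (\tr (A *m A)) = f (\sum_(x <- lam) x ^+ 2).
  rewrite /f -trace_map_mx -/f map_mxM -/Ac Ae cj trc mulmx_diag mxtrace_diag -sd.
  by apply: eq_bigr => j _; rewrite mxE expr2.
have e3 : f (\tr (A *m A *m A)) = f (\sum_(x <- lam) x ^+ 3).
  rewrite /f -trace_map_mx -/f !map_mxM -/Ac Ae !cj trc !mulmx_diag mxtrace_diag -sd.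
  by apply: eq_bigr => j _; rewrite !mxE !exprS expr0 mulr1 mulrA.
by split; apply: complexI.
Qed.
Lemma core (R : realType) (w a K M Me c S Q l T R3 : R) :
 3 <= w -> a ^+ 3 = w -> 0 < a -> w <= K -> 0 < M -> 0 < c -> 0 < Me ->
 22 / 10 * c * K ^+ 2 <= Me ->
 1 <= l -> l <= w -> 0 <= S -> 0 <= Q -> S + Q <= 2 * M ->
 S * Num.sqrt (S / l) <= T -> - (Num.sqrt Q * Q) <= R3 ->
 T + R3 <= 6 * c * (M * Num.sqrt M / Me) ->
 S / M < 2 * (a / (1 + a) + K^-1).
Proof.
move=> w3 a3 a0 wK M0 c0 Me0 hMe l1 lw S0 Q0 SQ hT hR hE.
rewrite ltNge; apply/negP => hc.
have K0 : 0 < K by lra.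
have a1 : 1 <= a.
  rewrite leNgt; apply/negP => a1.
  have : a ^+ 3 < 1 by rewrite -(expr1n _ 3); rewrite ltrXn2r //; lra.
  lra.
set x0 := a / (1 + a). set y0 := 1 / (1 + a).
have a1p : 0 < 1 + a by lra.
have xy : x0 + y0 = 1 by rewrite /x0 /y0 -mulrDl addrC divff // gt_eqF.
have x0a : x0 = a * y0 by rewrite /x0 /y0 mul1r mulrC.
have y00 : 0 < y0 by rewrite /y0 divr_gt0.
have x0h : 1 / 2 <= x0 by nra.
have d0 : 0 < K^-1 by rewrite invr_gt0.
have hS : 2 * M * (x0 + K^-1) <= S.
  by rewrite -(ler_pM2r M0) in hc; move: hc; rewrite mulrAC divfK ?gt_eqF //; lra.
set u := Num.sqrt S. set v := Num.sqrt (2 * M - S).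
set W := Num.sqrt w. set sM := Num.sqrt M.
set u0 := Num.sqrt (2 * M * x0). set v0 := Num.sqrt (2 * M * y0).
have u2 : u ^+ 2 = S by rewrite sqr_sqrtr.
have v2 : v ^+ 2 = 2 * M - S by rewrite sqr_sqrtr //; lra.
have W2 : W ^+ 2 = w by rewrite sqr_sqrtr //; lra.
have sM2 : sM ^+ 2 = M by rewrite sqr_sqrtr //; lra.
have u02 : u0 ^+ 2 = 2 * M * x0 by rewrite sqr_sqrtr //; nra.
have v02 : v0 ^+ 2 = 2 * M * y0 by rewrite sqr_sqrtr //; nra.
have u_0 : 0 <= u by apply: sqrtr_ge0.
have v_0 : 0 <= v by apply: sqrtr_ge0.
have W0 : 0 < W by rewrite sqrtr_gt0; lra.
have sM0 : 0 < sM by rewrite sqrtr_gt0.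
have u00 : 0 <= u0 by apply: sqrtr_ge0.
have v00 : 0 <= v0 by apply: sqrtr_ge0.
have WK : W <= K by nra.
have u0M : sM <= u0 by nra.
have hT' : u ^+ 3 <= T * W.
  have : u <= Num.sqrt (S / l) * W.
    rewrite -sqrtrM ?divr_ge0 //; last lra.
    rewrite ler_sqrt; last by apply: mulr_ge0; [apply: divr_ge0|]; lra.
    rewrite -mulrA; apply: ler_peMr => //.
    by rewrite ler_pdivlMl; lra.
  move=> h; have : u ^+ 3 <= S * (Num.sqrt (S / l) * W) by rewrite exprS u2 mulrC; apply: ler_wpM2l.
  nra.
have hR' : Num.sqrt Q * Q <= v ^+ 3.
  have hq : Num.sqrt Q <= v by rewrite /v ler_sqrt; lra.
  have : Q <= v ^+ 2 by lra.
  have := sqrtr_ge0 Q; nra.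
have e6 : u0 ^+ 6 = w * v0 ^+ 6.
  rewrite (_ : 6 = 2 * 3)%N // !exprM u02 v02 x0a -a3; ring.
have e3 : u0 ^+ 3 = W * v0 ^+ 3.
  have h1 : (u0 ^+ 3) ^+ 2 = (W * v0 ^+ 3) ^+ 2.
    by rewrite -exprM exprMn -exprM W2 e6.
  move/eqP: h1; rewrite eqrXn2 //; first by move/eqP.
    by rewrite exprn_ge0.
  by rewrite mulr_ge0 ?exprn_ge0 // ltW.
have cu : 3 / 2 * u0 * (u ^+ 2 - u0 ^+ 2) <= u ^+ 3 - u0 ^+ 3.
  have : 0 <= (u - u0) ^+ 2 * (u + u0 / 2) by apply: mulr_ge0; [apply: sqr_ge0|lra].
  nra.
have cv : 3 / 2 * v * (v0 ^+ 2 - v ^+ 2) <= v0 ^+ 3 - v ^+ 3.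
  have : 0 <= (v0 - v) ^+ 2 * (v0 + v / 2) by apply: mulr_ge0; [apply: sqr_ge0|lra].
  nra.
have dd : 2 * M * K^-1 <= u ^+ 2 - u0 ^+ 2 by rewrite u2 u02; lra.
have dv : v0 ^+ 2 - v ^+ 2 = u ^+ 2 - u0 ^+ 2.
  rewrite v02 v2 u2 u02; have := congr1 (fun z => 2 * M * z) xy; rewrite /= mulr1 mulrDr; lra.
have low : 3 / 2 * u0 * (u ^+ 2 - u0 ^+ 2) <= u ^+ 3 - W * v ^+ 3.
  have h0 : 0 <= 3 / 2 * v * (v0 ^+ 2 - v ^+ 2).
    by apply: mulr_ge0; [apply: mulr_ge0 => //; lra| rewrite dv; have := mulr_gt0 M0 d0; lra].
  have h1 : W * (3 / 2 * v * (v0 ^+ 2 - v ^+ 2)) <= W * (v0 ^+ 3 - v ^+ 3).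
    by apply: ler_wpM2l => //; lra.
  have h2 : 0 <= W * (3 / 2 * v * (v0 ^+ 2 - v ^+ 2)) by apply: mulr_ge0; lra.
  have : W * (v0 ^+ 3 - v ^+ 3) = u0 ^+ 3 - W * v ^+ 3 by rewrite e3; ring.
  lra.
have up : u ^+ 3 - W * v ^+ 3 <= W * (6 * c * (M * sM / Me)).
  have hE' : T + R3 <= 6 * c * (M * sM / Me) by exact: hE.
  have h : T <= 6 * c * (M * sM / Me) + v ^+ 3 by lra.
  have := ler_wpM2l (ltW W0) h; rewrite mulrDr; lra.
have : 3 * M * sM * K^-1 <= W * (6 * c * (M * sM / Me)).
  apply: le_trans up; apply: le_trans low.
  have : 0 <= 2 * M * K^-1 by apply: mulr_ge0; lra.
  nra.
move=> h.
have q0 : 0 < M * sM / (K * Me) by apply: divr_gt0; apply: mulr_gt0.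
have eq1 : 3 * M * sM * K^-1 = (3 * Me) * (M * sM / (K * Me)).
  by field; apply/andP; split; apply: lt0r_neq0.
have eq2 : W * (6 * c * (M * sM / Me)) = (6 * c * W * K) * (M * sM / (K * Me)).
  by field; apply/andP; split; apply: lt0r_neq0.
rewrite eq1 eq2 ler_pM2r // in h.
have : c * W * K <= c * K * K.
  by rewrite -mulrA -[c * K * K]mulrA; apply: ler_wpM2l; [lra|apply: ler_wpM2r; lra].
rewrite expr2 in hMe.
have := mulr_gt0 (mulr_gt0 c0 K0) K0.
lra.
Qed.
Lemma sum_card2 (T1 T2 : finType) (P : T1 -> T2 -> bool) :
  (\sum_i \sum_j (P i j : nat) = #|[set p : T1 * T2 | P p.1 p.2]|)%N.
Proof.
rewrite pair_big /= -sum1_card [RHS]big_mkcond /=.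
by apply: eq_bigr => p _; rewrite inE; case: (P _ _).
Qed.

Lemma sum_card3 (T1 T2 T3 : finType) (P : T1 -> T2 -> T3 -> bool) :
  (\sum_i \sum_j \sum_k (P i j k : nat) =
   #|[set p : T1 * (T2 * T3) | P p.1 p.2.1 p.2.2]|)%N.
Proof.
rewrite -(@sum_card2 _ _ (fun i (q : T2 * T3) => P i q.1 q.2)).
by apply: eq_bigr => i _; rewrite pair_big.
Qed.

Lemma swap12 n (F : 'I_n -> 'I_n -> 'I_n -> nat) :
  (\sum_i \sum_j \sum_k F i j k = \sum_i \sum_j \sum_k F j i k)%N.
Proof. by rewrite exchange_big. Qed.

Lemma swap23 n (F : 'I_n -> 'I_n -> 'I_n -> nat) :
  (\sum_i \sum_j \sum_k F i j k = \sum_i \sum_j \sum_k F i k j)%N.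
Proof. by apply: eq_bigr => i _; rewrite exchange_big. Qed.

Lemma sum_lt2 n (adj : rel 'I_n) : simple_graph adj ->
  (\sum_(i : 'I_n) \sum_(j : 'I_n) (adj i j : nat) = 2 * \sum_(i : 'I_n) \sum_(j : 'I_n) ((i < j) && adj i j : nat))%N.
Proof.
move=> [sym irr].
have -> : (\sum_(i : 'I_n) \sum_(j : 'I_n) (adj i j : nat) =
   \sum_(i : 'I_n) \sum_(j : 'I_n) ((i < j) && adj i j : nat) + \sum_(i : 'I_n) \sum_(j : 'I_n) ((j < i) && adj i j : nat))%N.
  rewrite -big_split; apply: eq_bigr => i _; rewrite -big_split; apply: eq_bigr => j _ /=.
  case: (ltngtP i j) => ij; rewrite ?addn0 ?add0n //; by rewrite (val_inj ij) irr.
rewrite [X in (_ + X)%N]exchange_big /=.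
have -> : (\sum_(j : 'I_n) \sum_(i : 'I_n) ((j < i) && adj i j : nat) = \sum_(i : 'I_n) \sum_(j : 'I_n) ((i < j) && adj i j : nat))%N.
  by apply: eq_bigr => i _; apply: eq_bigr => j _; rewrite sym.
by rewrite addnn -mul2n.
Qed.

Lemma lt_edges n (adj : rel 'I_n) : simple_graph adj ->
  (#|[set p : 'I_n * 'I_n | (p.1 < p.2) && adj p.1 p.2]| <= num_edges adj)%N.
Proof.
move=> [sym irr].
set L := [set p : 'I_n * 'I_n | _].
have inj : {in L &, injective (fun p : 'I_n * 'I_n => [set p.1; p.2])}.
  move=> [a b] [c d]; rewrite !inE /= => /andP[ab _] /andP[cd _] E.
  have h1 : a \in [set c; d] by rewrite -E set21.
  have h2 : b \in [set c; d] by rewrite -E set22.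
  have h3 : c \in [set a; b] by rewrite E set21.
  have h4 : d \in [set a; b] by rewrite E set22.
  move: h1 h2 h3 h4; rewrite !in_set2 -!val_eqE /= => h1 h2 h3 h4.
  apply/eqP; rewrite xpair_eqE -!val_eqE /=.
  lia.
rewrite /num_edges -(card_in_imset inj); apply: subset_leq_card.
apply/fintype.subsetP => e /imsetP [[a b]]; rewrite inE /= => /andP[_ ab] ->.
rewrite inE; apply/existsP; exists a; apply/existsP; exists b; by rewrite ab eqxx.
Qed.

Lemma tr2_le (R : realType) n (adj : rel 'I_n) : simple_graph adj ->
  \tr (adj_mx R adj *m adj_mx R adj) <= 2 * (num_edges adj)%:R.
Proof.
move=> G; have [sym irr] := G.
have -> : \tr (adj_mx R adj *m adj_mx R adj) =
    (\sum_(i : 'I_n) \sum_(j : 'I_n) (adj i j : nat))%:R.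
  rewrite /mxtrace natr_sum; apply: eq_bigr => i _; rewrite mxE natr_sum.
  apply: eq_bigr => j _; rewrite !mxE (sym j i).
  by case: (adj i j); rewrite ?mulr1 ?mulr0.
rewrite sum_lt2 // natrM ler_pM2l // ler_nat.
rewrite (@sum_card2 _ _ (fun i j : 'I_n => (i < j)%N && adj i j)).
exact: lt_edges.
Qed.

Definition tri n (adj : rel 'I_n) i j k := [&& adj i j, adj j k & adj i k].

Definition sum3 n (F : 'I_n -> 'I_n -> 'I_n -> nat) :=
  (\sum_(i : 'I_n) \sum_(j : 'I_n) \sum_(k : 'I_n) F i j k)%N.

Lemma sum3D n (F G : 'I_n -> 'I_n -> 'I_n -> nat) :
  sum3 (fun i j k => F i j k + G i j k)%N = (sum3 F + sum3 G)%N.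
Proof.
rewrite /sum3 -big_split; apply: eq_bigr => i _; rewrite -big_split.
by apply: eq_bigr => j _; rewrite -big_split.
Qed.

Lemma sum3_12 n (F : 'I_n -> 'I_n -> 'I_n -> nat) :
  sum3 (fun i j k => F j i k) = sum3 F.
Proof. by rewrite /sum3 exchange_big. Qed.

Lemma sum3_23 n (F : 'I_n -> 'I_n -> 'I_n -> nat) :
  sum3 (fun i j k => F i k j) = sum3 F.
Proof. by rewrite /sum3; apply: eq_bigr => i _; rewrite exchange_big. Qed.

Lemma sum_tri6 n (adj : rel 'I_n) : simple_graph adj ->
  sum3 (fun i j k => tri adj i j k : nat) =
  (6 * sum3 (fun i j k => [&& (i < j)%N, (j < k)%N & tri adj i j k] : nat))%N.
Proof.
move=> [sym irr].
pose G (i j k : 'I_n) := ([&& (i < j)%N, (j < k)%N & tri adj i j k] : nat).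
have tP : forall i j k : 'I_n, tri adj i j k = tri adj j i k /\ tri adj i j k = tri adj i k j.
  move=> i j k; rewrite /tri; split.
    by rewrite (sym i j); case: (adj j i); case: (adj i k); case: (adj j k).
  by rewrite (sym j k); case: (adj i j); case: (adj i k); case: (adj k j).
have e : forall i j k : 'I_n, (tri adj i j k : nat) =
   (G i j k + G i k j + G j i k + G j k i + G k i j + G k j i)%N.
  move=> i j k; rewrite /G.
  have e1 : tri adj i k j = tri adj i j k by rewrite (tP i j k).2.
  have e2 : tri adj j i k = tri adj i j k by rewrite (tP i j k).1.
  have e3 : tri adj j k i = tri adj i j k by rewrite (tP j k i).2 e2.
  have e4 : tri adj k i j = tri adj i j k by rewrite (tP k i j).1 e1.
  have e5 : tri adj k j i = tri adj i j k by rewrite (tP k j i).1 e3.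
  rewrite e1 e2 e3 e4 e5.
  case T : (tri adj i j k); last by rewrite !andbF.
  move: T; rewrite /tri => /and3P[hij hjk hik].
  have dij : (i : nat) != j by apply/eqP => /val_inj E; move: hij; rewrite E irr.
  have djk : (j : nat) != k by apply/eqP => /val_inj E; move: hjk; rewrite E irr.
  have dik : (i : nat) != k by apply/eqP => /val_inj E; move: hik; rewrite E irr.
  rewrite !andbT.
  case: (ltngtP i j) => h1; case: (ltngtP j k) => h2; case: (ltngtP i k) => h3 //=; lia.
rewrite [LHS](_ : _ = sum3 (fun i j k => G i j k + G i k j + G j i k + G j k i + G k i j + G k j i)%N); last first.
  by rewrite /sum3; apply: eq_bigr => i _; apply: eq_bigr => j _; apply: eq_bigr => k _; rewrite e.
rewrite !sum3D.
have s1 : sum3 (fun i j k => G i k j) = sum3 G := sum3_23 G.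
have s2 : sum3 (fun i j k => G j i k) = sum3 G := sum3_12 G.
have s3 : sum3 (fun i j k => G j k i) = sum3 G := etrans (sum3_12 (fun i j k => G i k j)) s1.
have s4 : sum3 (fun i j k => G k i j) = sum3 G := etrans (sum3_23 (fun i j k => G j i k)) s2.
have s5 : sum3 (fun i j k => G k j i) = sum3 G := etrans (sum3_12 (fun i j k => G k i j)) s4.
rewrite s1 s2 s3 s4 s5.
rewrite -/G; lia.
Qed.

Lemma inc_tri_le n (adj : rel 'I_n) : simple_graph adj ->
  (#|[set p : 'I_n * ('I_n * 'I_n) |
      [&& (p.1 < p.2.1)%N, (p.2.1 < p.2.2)%N & tri adj p.1 p.2.1 p.2.2]]|
   <= num_triangles adj)%N.
Proof.
move=> [sym irr].
set L := [set p : 'I_n * ('I_n * 'I_n) | _].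
pose f (p : 'I_n * ('I_n * 'I_n)) := [set p.1; p.2.1; p.2.2].
have inj : {in L &, injective f}.
  move=> [a [b c]] [a' [b' c']]; rewrite !inE /= => /and3P[ab bc _] /and3P[ab' bc' _].
  rewrite /f /= => E.
  have h1 : a \in [set a'; b'; c'] by rewrite -E !inE eqxx.
  have h2 : b \in [set a'; b'; c'] by rewrite -E !inE eqxx !orbT.
  have h3 : c \in [set a'; b'; c'] by rewrite -E !inE eqxx !orbT.
  have h4 : a' \in [set a; b; c] by rewrite E !inE eqxx.
  have h5 : b' \in [set a; b; c] by rewrite E !inE eqxx !orbT.
  have h6 : c' \in [set a; b; c] by rewrite E !inE eqxx !orbT.
  move: h1 h2 h3 h4 h5 h6; rewrite !inE -!val_eqE /= => h1 h2 h3 h4 h5 h6.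
  apply/eqP; rewrite !xpair_eqE -!val_eqE /=.
  lia.
rewrite /num_triangles -(card_in_imset inj); apply: subset_leq_card.
apply/fintype.subsetP => S /imsetP [[a [b c]]]; rewrite inE /= => /and3P[ab bc].
rewrite /tri => /and3P[hab hbc hac] ->.
rewrite inE /f /=; apply/andP; split.
  apply/forallP => x; apply/implyP => xS; apply/forallP => y; apply/implyP => yS.
  apply/implyP => xy.
  move: xS yS xy; rewrite !inE => /orP[/orP[/eqP->|/eqP->]|/eqP->] /orP[/orP[/eqP->|/eqP->]|/eqP->]; rewrite ?eqxx //= => _;
    by rewrite ?hab ?hbc ?hac // sym ?hab ?hbc ?hac.
have dab : a != b by apply/eqP => E; move: ab; rewrite E ltnn.
have dbc : b != c by apply/eqP => E; move: bc; rewrite E ltnn.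
have dac : a != c by apply/eqP => E; move: (ltn_trans ab bc); rewrite E ltnn.
rewrite finset.setUC cardsU1 cards2 !inE negb_or dab (eq_sym c a) dac (eq_sym c b) dbc.
by [].
Qed.

Lemma tr3_le (R : realType) n (adj : rel 'I_n) : simple_graph adj ->
  \tr (adj_mx R adj *m adj_mx R adj *m adj_mx R adj) <= 6 * (num_triangles adj)%:R.
Proof.
move=> G; have [sym irr] := G.
have -> : \tr (adj_mx R adj *m adj_mx R adj *m adj_mx R adj) =
    (sum3 (fun i j k => tri adj i k j : nat))%:R.
  rewrite /mxtrace /sum3 natr_sum; apply: eq_bigr => i _; rewrite mxE natr_sum.
  apply: eq_bigr => j _; rewrite !mxE natr_sum mulr_suml.
  apply: eq_bigr => k _; rewrite !mxE /tri (sym j i).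
  by case: (adj i j); case: (adj i k); case: (adj k j); rewrite ?mulr1 ?mulr0 ?mul0r.
rewrite (sum3_23 (fun i j k => tri adj i j k : nat)) sum_tri6 // natrM ler_pM2l // ler_nat.
rewrite /sum3 (@sum_card3 _ _ _ (fun i j k : 'I_n => [&& (i < j)%N, (j < k)%N & tri adj i j k])).
exact: inc_tri_le.
Qed.
Lemma powmean (R : realType) (s : seq R) : all (fun x => 0 <= x) s -> (0 < size s)%N ->
  (\sum_(x <- s) x ^+ 2) * Num.sqrt ((\sum_(x <- s) x ^+ 2) / (size s)%:R)
    <= \sum_(x <- s) x ^+ 3.
Proof.
move=> /allP s0 sz.
set S := \sum_(x <- s) x ^+ 2.
have l0 : 0 < (size s)%:R :> R by rewrite ltr0n.
have S0 : 0 <= S by rewrite /S big_seq; apply: sumr_ge0 => x _; apply: sqr_ge0.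
set mu := Num.sqrt _.
have mu0 : 0 <= mu by apply: sqrtr_ge0.
have mu2 : mu ^+ 2 * (size s)%:R = S.
  by rewrite sqr_sqrtr ?divr_ge0 ?(ltW l0) // -mulrA mulVf ?mulr1 // gt_eqF.
have tang : forall x, x \in s -> 3 / 2 * mu * x ^+ 2 - 1 / 2 * mu ^+ 3 <= x ^+ 3.
  move=> x /s0 x0.
  have : 0 <= (x - mu) ^+ 2 * (x + mu / 2) by apply: mulr_ge0; [apply: sqr_ge0|lra].
  nra.
have := ler_sum s tang.
rewrite -!big_seq sumrB -mulr_sumr big_const_seq count_predT.
rewrite -/S.
have -> : iter (size s) (+%R (1 / 2 * mu ^+ 3)) 0 = 1 / 2 * mu ^+ 3 * (size s)%:R.
  by elim: (size s) => [|m IH]; rewrite ?mulr0 //= IH -[m.+1]addn1 natrD mulrDr mulr1 addrC.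
have : mu ^+ 3 * (size s)%:R = mu * S by rewrite -mu2 exprS mulrA.
nra.
Qed.

Lemma negcube (R : realType) (s : seq R) (r : R) : 0 <= r ->
  \sum_(x <- s) x ^+ 2 <= r ^+ 2 -> - (r * \sum_(x <- s) x ^+ 2) <= \sum_(x <- s) x ^+ 3.
Proof.
move=> r0; elim: s => [|x s IH]; first by rewrite !big_nil mulr0 oppr0.
rewrite !big_cons => h.
have h1 : \sum_(y <- s) y ^+ 2 <= r ^+ 2.
  have : 0 <= x ^+ 2 by apply: sqr_ge0. lra.
have h2 : x ^+ 2 <= r ^+ 2.
  have : 0 <= \sum_(y <- s) y ^+ 2 by apply: sumr_ge0 => y _; apply: sqr_ge0. lra.
have := IH h1.
have : - (r * x ^+ 2) <= x ^+ 3.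
  have hx : - r <= x by nra.
  nra.
lra.
Qed.

Lemma take_pos (R : realType) (s : seq R) : sorted >=%R s ->
  all (fun x => 0 < x) (take (count (fun x => 0 < x) s) s).
Proof.
elim: s => [//|x s IH] /= hp.
have hs := path_sorted hp.
have [x0|x0] := boolP (0 < x).
  by rewrite /= x0 add0n IH.
have : all (>=%R x) s.
  have tr : transitive (>=%R : rel R) by move=> a b c /= ba cb; exact: le_trans cb ba.
  exact: (order_path_min tr hp).
move=> /allP hall.
rewrite add0n (@eq_in_count _ _ pred0) ?count_pred0 //.
move=> y /hall /= yx; apply/negbTE; rewrite -leNgt; apply: le_trans yx _.
by rewrite leNgt.
Qed.

Theorem theorem1p4 (R : realType) (w : nat) (eps c k : R)
  (n : nat) (adj : rel 'I_n) (lam : seq R) :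
  (3 <= w)%N -> 0 < eps -> 0 < c -> 1 <= k ->
  simple_graph adj ->
  clique_number adj = w ->
  (num_triangles adj)%:R <= c * powR (num_edges adj)%:R (3 / 2 - eps) ->
  powR (22 / 10 * c * powR w%:R (2 * k)) (eps^-1) <= (num_edges adj)%:R ->
  sorted_eigenvalues (adj_mx R adj) lam ->
  Lambda_k lam (num_edges adj) (minn (n_pos lam) w)
    < 2 * (powR w%:R (3^-1) / (1 + powR w%:R (3^-1)) + (powR w%:R k)^-1).
Proof.
move=> hw eps0 c0 k1 G _ ht hm [cA srt].
have [sym irr] := G.
have tA : (adj_mx R adj)^T = adj_mx R adj.
  by apply/matrixP => i j; rewrite !mxE sym.
have [tr2 tr3] := trace_pow tA cA.
rewrite /Lambda_k /s_k.
set ell := minn (n_pos lam) w.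
set m := num_edges adj.
set S := \sum_(x <- take ell lam) x ^+ 2.
set Q := \sum_(x <- drop ell lam) x ^+ 2.
set T := \sum_(x <- take ell lam) x ^+ 3.
set R3 := \sum_(x <- drop ell lam) x ^+ 3.
have e2 : \sum_(x <- lam) x ^+ 2 = S + Q by rewrite -big_cat cat_take_drop.
have e3 : \sum_(x <- lam) x ^+ 3 = T + R3 by rewrite -big_cat cat_take_drop.
set a := powR w%:R (3^-1).
set K := powR w%:R k.
have w1 : 1 <= w%:R :> R by rewrite ler1n; lia.
have a0 : 0 < a by apply: powR_gt0; lra.
have K1 : w%:R <= K by apply: le1r_powR.
have K0 : 0 < K by lra.
have rhs0 : 0 < 2 * (a / (1 + a) + K^-1).
  apply: mulr_gt0 => //; apply: addr_gt0; last by rewrite invr_gt0.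
  by apply: divr_gt0 => //; lra.
have [ell0|ellp] := eqVneq ell 0%N.
  by rewrite /S ell0 take0 big_nil mul0r.
have ellp' : (0 < ell)%N by rewrite lt0n.
have hpos : all (fun x => 0 < x) (take ell lam).
  have hle : (ell <= n_pos lam)%N by apply: geq_minl.
  have := take_pos srt; rewrite -/(n_pos lam) => hall.
  rewrite -(take_takel _ hle); apply/allP => x /mem_take; move/allP: hall; apply.
have szt : size (take ell lam) = ell.
  by apply: size_takel; apply: leq_trans (geq_minl _ _) _; exact: count_size.
set B := 22 / 10 * c * powR w%:R (2 * k).
have KB : powR w%:R (2 * k) = K ^+ 2.
  by rewrite mulrC powRrM -powR_mulrn // powR_ge0.
have B0 : 0 < B by rewrite /B KB; apply: mulr_gt0; [apply: mulr_gt0; lra| apply: exprn_gt0].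
have M0 : 0 < m%:R :> R by apply: lt_le_trans hm; apply: powR_gt0.
have hMe : B <= powR m%:R eps.
  have h : powR (powR B eps^-1) eps <= powR m%:R eps.
    apply: ge0_ler_powR; [exact: ltW eps0 | by rewrite nnegrE powR_ge0 | | exact: hm].
    by rewrite nnegrE; lra.
  rewrite -powRrM mulVf ?gt_eqF // powRr1 in h; [exact: h|exact: ltW B0].
have a3 : a ^+ 3 = w%:R.
  rewrite /a -powR_mulrn ?powR_ge0 // -powRrM mulVf ?powRr1 //; first lra.
have Me : powR m%:R (3 / 2 - eps) = m%:R * Num.sqrt m%:R / powR m%:R eps.
  rewrite powRB; last by rewrite (gt_eqF M0) implybT.
  have -> : (3 / 2 : R) = 1 + 2^-1 by field.
  rewrite powRD; last by rewrite (gt_eqF M0) implybT.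
  by rewrite powRr1 ?ltW // powR12_sqrt ?ltW.
have S0 : 0 <= S by apply: sumr_ge0 => x _; apply: sqr_ge0.
have Q0 : 0 <= Q by apply: sumr_ge0 => x _; apply: sqr_ge0.
apply: (core (w := w%:R) (Q := Q) (T := T) (R3 := R3) (l := ell%:R)
              (Me := powR m%:R eps) (c := c)) => //.
- by rewrite (ler_nat R 3 w).
- by apply: powR_gt0.
- by rewrite -KB.
- by rewrite ler1n.
- by rewrite ler_nat geq_minr.
- rewrite -e2 -tr2; exact: tr2_le.
- have := powmean (sub_all (fun x (h : 0 < x) => ltW h) hpos).
  by rewrite szt => /(_ ellp').
- apply: negcube; first by apply: sqrtr_ge0.
  by rewrite sqr_sqrtr.
- rewrite -e3 -tr3 -Me; apply: le_trans (tr3_le R G) _.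
  by rewrite -mulrA ler_pM2l //; lra.
Qed.
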